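(* Let $(B,\sqsubseteq)$ be a $\mathsf{DCPO}_\bot$-ordered functor with a cofree comonad $(B^\infty,\epsilon,\delta)$ such that $B$ preserves weak pullbacks, let $\Sigma$ be a functor with a free monad $(\Sigma^*,\eta,\mu)$, and let $\rho\colon\Sigma B^\infty\Rightarrow B\Sigma^*$ be a monotone biGSOS specification. Then there exists a distributive law $\lambda\colon\Sigma^*B^\infty\Rightarrow B^\infty\Sigma^*$ of the monad $(\Sigma^*,\eta,\mu)$ over the comonad $(B^\infty,\epsilon,\delta)$ whose operational model is the least supported model of $\rho$.
   Context: An ordered functor $(B,\sqsubseteq)$ is a functor $B\colon\mathsf{Set}\to\mathsf{Set}$ together with a preorder $\sqsubseteq_{BX}$ on $BX$ for every set $X$, such that $Bf$ is monotone for every function $f$. It is $\mathsf{DCPO}_\bot$-ordered if moreover each $\sqsubseteq_{BX}$ is a partial order making $BX$ a pointed DCPO (least element and suprema of all directed subsets), and each $Bf$ is continuous, i.e. preserves suprema of all directed subsets including the empty one. Relation lifting: for $R\subseteq X\times Y$ with projections $\pi_1,\pi_2$ and any functor $F$, $\mathsf{Rel}(F)(R)=\{(b,c)\in FX\times FY\mid\exists d\in FR.\ F\pi_1(d)=b,\ F\pi_2(d)=c\}$; $\mathsf{Rel}_{\sqsubseteq}(B)(R)=\{(b,c)\mid\exists b',c'.\ b\sqsubseteq b',\ (b',c')\in\mathsf{Rel}(B)(R),\ c'\sqsubseteq c\}$. For coalgebras $f\colon X\to BX$, $g\colon Y\to BY$, $R\subseteq X\times Y$ is a simulation if $(f(x),g(y))\in\mathsf{Rel}_{\sqsubseteq}(B)(R)$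 for all $(x,y)\in R$; similarity is the greatest simulation. Cofree comonad: for each set $X$, $\theta_X\colon B^\infty X\to BB^\infty X$, $\epsilon_X\colon B^\infty X\to X$ with $\langle\theta_X,\epsilon_X\rangle$ a final $B(-)\times X$-coalgebra; for $f\colon X\to BX$, $f^\infty\colon X\to B^\infty X$ is the unique coalgebra morphism from $\langle f,\mathrm{id}_X\rangle$ to $\langle\theta_X,\epsilon_X\rangle$; $B^\infty h$ for $h\colon X\to Y$ is the unique coalgebra morphism from $\langle\theta_X,h\circ\epsilon_X\rangle$ to $\langle\theta_Y,\epsilon_Y\rangle$; the comultiplication is $\delta_X=(\theta_X)^\infty$. The functor $B(-)\times X$ is ordered by $(b,x)\,\widetilde\sqsubseteq\,(c,y)$ iff $b\sqsubseteq c$ and $x=y$; $\lesssim_{B^\infty X}$ is the similarity of $\langle\theta_X,\epsilon_X\rangle$ with itself w.r.t. this order. Free monad: for each set $X$, $\iota_X\colon\Sigma\Sigma^*X\to\Sigma^*X$, $\eta_X\colon X\to\Sigma^*X$ with $[\iota_X,\eta_X]$ an initial algebra for $\Sigma(-)+X$; $\mu_X\colon\Sigma^*\Sigma^*X\to\Sigma^*X$ is the unique map with $\mu_X\circ\eta_{\Sigma^*X}=\mathrm{id}$ and $\mu_X\circ\iota_{\Sigma^*X}=\iota_X\circ\Sigma\mu_X$. A biGSOS specification is a natural transformation $\rho\colon\Sigma B^\infty\Rightarrow B\Sigma^*$; it is monotone if for every set $X$ and all $u,v\in\Sigma B^\infty X$ with $(u,v)\in\mathsf{Rel}(\Sigma)(\lesssim_{B^\infty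 X})$, $\rho_X(u)\sqsubseteq_{B\Sigma^*X}\rho_X(v)$. A supported model of $\rho$ is $f\colon\Sigma^*\emptyset\to B\Sigma^*\emptyset$ with $f\circ\iota_\emptyset=B\mu_\emptyset\circ\rho_{\Sigma^*\emptyset}\circ\Sigma f^\infty$; the least one is least in the pointwise order $\sqsubseteq_{B\Sigma^*\emptyset}$. A distributive law of the monad $(T,\eta,\mu)$ over the comonad $(D,\epsilon,\delta)$ is a natural transformation $\lambda\colon TD\Rightarrow DT$ with $\lambda\circ\eta D=D\eta$, $\epsilon T\circ\lambda=T\epsilon$, $\lambda\circ\mu D=D\mu\circ\lambda T\circ T\lambda$ and $D\lambda\circ\lambda D\circ T\delta=\delta T\circ\lambda$. The operational model of such $\lambda$ (with $T=\Sigma^*$, $D=B^\infty$) is the unique function $m\colon\Sigma^*\emptyset\to B\Sigma^*\emptyset$ such that $h=m^\infty$ satisfies $h\circ\mu_\emptyset=B^\infty\mu_\emptyset\circ\lambda_{\Sigma^*\emptyset}\circ\Sigma^*h$. *)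

(* Defs.v *)
Definition U := Type.

Record Functor : Type := {
  fobj :> U -> U;
  fmap : forall (A B : U), (A -> B) -> fobj A -> fobj B;
  fmap_id : forall (A : U) (x : fobj A), fmap A A (fun a => a) x = x;
  fmap_comp : forall (A B C : U) (f : A -> B) (g : B -> C) (x : fobj A),
      fmap A C (fun a => g (f a)) x = fmap B C g (fmap A B f x)
}.
Arguments fmap f0 {A B} _ _.

Definition is_ub {T : Type} (le : T -> T -> Prop) (D : T -> Prop) (s : T) : Prop :=
  forall x, D x -> le x s.
Definition is_lub {T : Type} (le : T -> T -> Prop) (D : T -> Prop) (s : T) : Prop :=
  is_ub le D s /\ forall u, is_ub le D u -> le s u.
Definition directed {T : Type} (le : T -> T -> Prop) (D : T -> Prop) : Prop :=
  (exists x, D x) /\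
  forall x y, D x -> D y -> exists z, D z /\ le x z /\ le y z.

Definition ordered_functor (B : Functor) (le : forall X : U, B X -> B X -> Prop) : Prop :=
  (forall X (x : B X), le X x x) /\
  (forall X (x y z : B X), le X x y -> le X y z -> le X x z) /\
  (forall (X Y : U) (f : X -> Y) (x y : B X), le X x y -> le Y (fmap B f x) (fmap B f y)).

Definition dcpo_bot_ordered (B : Functor) (le : forall X : U, B X -> B X -> Prop) : Prop :=
  ordered_functor B le /\
  (forall X (x y : B X), le X x y -> le X y x -> x = y) /\
  (forall X : U, exists bot : B X, forall x, le X bot x) /\
  (forall (X : U) (D : B X -> Prop), directed (le X) D -> exists s, is_lub (le X) D s) /\
  (forall (X Y : U) (f : X -> Y) (D : B X -> Prop) (s : B X),
      (directed (le X) D \/ (forall x, ~ D x)) ->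
      is_lub (le X) D s ->
      is_lub (le Y) (fun y => exists x, D x /\ y = fmap B f x) (fmap B f s)).

Definition is_weak_pullback {X Y Z W : U} (f : X -> Z) (g : Y -> Z)
    (p1 : W -> X) (p2 : W -> Y) : Prop :=
  (forall w, f (p1 w) = g (p2 w)) /\
  forall (V : U) (q1 : V -> X) (q2 : V -> Y), (forall v, f (q1 v) = g (q2 v)) ->
    exists k : V -> W, (forall v, p1 (k v) = q1 v) /\ (forall v, p2 (k v) = q2 v).

Definition preserves_weak_pullbacks (F : Functor) : Prop :=
  forall (X Y Z W : U) (f : X -> Z) (g : Y -> Z) (p1 : W -> X) (p2 : W -> Y),
    is_weak_pullback f g p1 p2 ->
    is_weak_pullback (fmap F f) (fmap F g) (fmap F p1) (fmap F p2).

Definition Rel {F : U -> U} (fm : forall A B : U, (A -> B) -> F A -> F B)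
    {X Y : U} (R : X -> Y -> Prop) (b : F X) (c : F Y) : Prop :=
  exists d : F {p : X * Y | R (fst p) (snd p)},
    fm _ _ (fun p => fst (proj1_sig p)) d = b /\
    fm _ _ (fun p => snd (proj1_sig p)) d = c.

Definition Rel_le {F : U -> U} (fm : forall A B : U, (A -> B) -> F A -> F B)
    (le : forall A : U, F A -> F A -> Prop)
    {X Y : U} (R : X -> Y -> Prop) (b : F X) (c : F Y) : Prop :=
  exists (b' : F X) (c' : F Y), le X b b' /\ Rel fm R b' c' /\ le Y c' c.

Definition simulation {F : U -> U} (fm : forall A B : U, (A -> B) -> F A -> F B)
    (le : forall A : U, F A -> F A -> Prop)
    {X Y : U} (f : X -> F X) (g : Y -> F Y) (R : X -> Y -> Prop) : Prop :=
  forall x y, R x y -> Rel_le fm le R (f x) (g y).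

Definition similarity {F : U -> U} (fm : forall A B : U, (A -> B) -> F A -> F B)
    (le : forall A : U, F A -> F A -> Prop)
    {X Y : U} (f : X -> F X) (g : Y -> F Y) (x : X) (y : Y) : Prop :=
  exists R : X -> Y -> Prop, simulation fm le f g R /\ R x y.

(** Cofree comonad: for each X, a final B(-) x X coalgebra <theta_X, eps_X>,
    with the (unique) coalgebra morphism given by [unfold]. *)
Record CofreeComonad (B : Functor) : Type := {
  Binf : U -> U;
  theta : forall X : U, Binf X -> B (Binf X);
  eps : forall X : U, Binf X -> X;
  unfold : forall (X C : U), (C -> B C) -> (C -> X) -> C -> Binf X;
  unfold_theta : forall (X C : U) (c : C -> B C) (e : C -> X) (x : C),
      theta X (unfold X C c e x) = fmap B (unfold X C c e) (c x);
  unfold_eps : forall (X C : U) (c : C -> B C) (e : C -> X) (x : C),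
      eps X (unfold X C c e x) = e x;
  unfold_unique : forall (X C : U) (c : C -> B C) (e : C -> X) (h : C -> Binf X),
      (forall x, theta X (h x) = fmap B h (c x)) ->
      (forall x, eps X (h x) = e x) ->
      forall x, h x = unfold X C c e x
}.

(** Free monad: for each X, an initial Sigma(-) + X algebra [iota_X, eta_X],
    with the (unique) algebra morphism given by [fold]. *)
Record FreeMonad (S : Functor) : Type := {
  Sstar : U -> U;
  iota : forall X : U, S (Sstar X) -> Sstar X;
  eta : forall X : U, X -> Sstar X;
  fold : forall (X A : U), (S A -> A) -> (X -> A) -> Sstar X -> A;
  fold_iota : forall (X A : U) (a : S A -> A) (b : X -> A) (t : S (Sstar X)),
      fold X A a b (iota X t) = a (fmap S (fold X A a b) t);
  fold_eta : forall (X A : U) (a : S A -> A) (b : X -> A) (x : X),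
      fold X A a b (eta X x) = b x;
  fold_unique : forall (X A : U) (a : S A -> A) (b : X -> A) (h : Sstar X -> A),
      (forall t, h (iota X t) = a (fmap S h t)) ->
      (forall x, h (eta X x) = b x) ->
      forall t, h t = fold X A a b t
}.

Arguments Binf {B} _ _.
Arguments theta {B} _ _ _.
Arguments eps {B} _ _ _.
Arguments unfold {B} _ _ _ _ _ _.
Arguments Sstar {S} _ _.
Arguments iota {S} _ _ _.
Arguments eta {S} _ _ _.
Arguments fold {S} _ _ _ _ _ _.

Section Derived.
Context {B : Functor} (C : CofreeComonad B) {S : Functor} (M : FreeMonad S).

Definition coext {X : U} (f : X -> B X) : X -> Binf C X :=
  unfold C X X f (fun x => x).
Definition Binf_map {X Y : U} (h : X -> Y) : Binf C X -> Binf C Y :=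
  unfold C Y (Binf C X) (theta C X) (fun t => h (eps C X t)).
Definition delta (X : U) : Binf C X -> Binf C (Binf C X) :=
  @coext (Binf C X) (theta C X).

Definition Sstar_map {X Y : U} (h : X -> Y) : Sstar M X -> Sstar M Y :=
  fold M X (Sstar M Y) (iota M Y) (fun x => eta M Y (h x)).
Definition mu (X : U) : Sstar M (Sstar M X) -> Sstar M X :=
  fold M (Sstar M X) (Sstar M X) (iota M X) (fun t => t).

Definition prodF (X : U) : U -> U := fun Y => (B Y * X)%type.
Definition prodF_map (X : U) : forall A A' : U, (A -> A') -> prodF X A -> prodF X A' :=
  fun A A' h p => (fmap B h (fst p), snd p).
Definition prodF_le (le : forall X : U, B X -> B X -> Prop) (X : U) :
    forall A : U, prodF X A -> prodF X A -> Prop :=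
  fun A p q => le A (fst p) (fst q) /\ snd p = snd q.

Definition lesim (le : forall X : U, B X -> B X -> Prop) (X : U) :
    Binf C X -> Binf C X -> Prop :=
  similarity (prodF_map X) (prodF_le le X)
    (fun t => (theta C X t, eps C X t)) (fun t => (theta C X t, eps C X t)).

Definition biGSOS_natural (rho : forall X : U, S (Binf C X) -> B (Sstar M X)) : Prop :=
  forall (X Y : U) (h : X -> Y) (u : S (Binf C X)),
    rho Y (fmap S (Binf_map h) u) = fmap B (Sstar_map h) (rho X u).

Definition monotone_biGSOS (le : forall X : U, B X -> B X -> Prop)
    (rho : forall X : U, S (Binf C X) -> B (Sstar M X)) : Prop :=
  forall (X : U) (u v : S (Binf C X)),
    Rel (fun A A' (h : A -> A') => fmap S h) (lesim le X) u v ->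
    le (Sstar M X) (rho X u) (rho X v).

Definition supported_model (rho : forall X : U, S (Binf C X) -> B (Sstar M X))
    (f : Sstar M Empty_set -> B (Sstar M Empty_set)) : Prop :=
  forall t : S (Sstar M Empty_set),
    f (iota M Empty_set t) =
    fmap B (mu Empty_set) (rho (Sstar M Empty_set) (fmap S (coext f) t)).

Definition least_supported_model (le : forall X : U, B X -> B X -> Prop)
    (rho : forall X : U, S (Binf C X) -> B (Sstar M X))
    (f : Sstar M Empty_set -> B (Sstar M Empty_set)) : Prop :=
  supported_model rho f /\
  forall g, supported_model rho g -> forall t, le (Sstar M Empty_set) (f t) (g t).

Definition distributive_law (lam : forall X : U, Sstar M (Binf C X) -> Binf C (Sstar M X)) : Prop :=
  (forall (X Y : U) (h : X -> Y) (t : Sstar M (Binf C X)),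
      lam Y (Sstar_map (Binf_map h) t) = Binf_map (Sstar_map h) (lam X t)) /\
  (forall (X : U) (d : Binf C X), lam X (eta M (Binf C X) d) = Binf_map (eta M X) d) /\
  (forall (X : U) (t : Sstar M (Binf C X)), eps C (Sstar M X) (lam X t) = Sstar_map (eps C X) t) /\
  (forall (X : U) (t : Sstar M (Sstar M (Binf C X))),
      lam X (mu (Binf C X) t) = Binf_map (mu X) (lam (Sstar M X) (Sstar_map (lam X) t))) /\
  (forall (X : U) (t : Sstar M (Binf C X)),
      Binf_map (lam X) (lam (Binf C X) (Sstar_map (delta X) t)) = delta (Sstar M X) (lam X t)).

Definition op_model_eq (lam : forall X : U, Sstar M (Binf C X) -> Binf C (Sstar M X))
    (m : Sstar M Empty_set -> B (Sstar M Empty_set)) : Prop :=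
  forall t : Sstar M (Sstar M Empty_set),
    coext m (mu Empty_set t) =
    Binf_map (mu Empty_set) (lam (Sstar M Empty_set) (Sstar_map (coext m) t)).

Definition operational_model (lam : forall X : U, Sstar M (Binf C X) -> Binf C (Sstar M X))
    (m : Sstar M Empty_set -> B (Sstar M Empty_set)) : Prop :=
  op_model_eq lam m /\ forall m', op_model_eq lam m' -> forall t, m' t = m t.

End Derived.

(* Main.v *)
Require Import Defs.
From Stdlib Require Import FunctionalExtensionality Classical ClassicalEpsilon.


Lemma fmap_ext (F : Functor) (A B0 : U) (f g : A -> B0) (x : F A) :
  (forall a, f a = g a) -> fmap F f x = fmap F g x.
Proof. intros H. replace f with g; [reflexivity|]. symmetry; apply functional_extensionality; exact H. Qed.

Lemma fmap_comp' (F : Functor) (A B0 C0 : U) (f : A -> B0) (g : B0 -> C0) (x : F A) :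
  fmap F g (fmap F f x) = fmap F (fun a => g (f a)) x.
Proof. symmetry; apply fmap_comp. Qed.

Section Co.
Context {B : Functor} (C : CofreeComonad B).

Lemma unfold_ext X Y (c : Y -> B Y) (e1 e2 : Y -> X) :
  (forall y, e1 y = e2 y) -> forall y, unfold C X Y c e1 y = unfold C X Y c e2 y.
Proof.
  intros He y. symmetry. apply unfold_unique.
  - intros x. apply unfold_theta.
  - intros x. rewrite unfold_eps. symmetry; apply He.
Qed.

Lemma unfold_morph X Y Z (c1 : Y -> B Y) (c2 : Z -> B Z) (g : Y -> Z) (e : Z -> X) :
  (forall y, fmap B g (c1 y) = c2 (g y)) ->
  forall y, unfold C X Z c2 e (g y) = unfold C X Y c1 (fun a => e (g a)) y.
Proof.
  intros Hg y. apply (unfold_unique _ C X Y c1 (fun a => e (g a)) (fun a => unfold C X Z c2 e (g a))).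
  - intros x. rewrite unfold_theta. rewrite <- Hg. rewrite fmap_comp'. reflexivity.
  - intros x. apply unfold_eps.
Qed.

Lemma Binf_map_unfold X X' Y (h : X -> X') (c : Y -> B Y) (e : Y -> X) y :
  Binf_map C h (unfold C X Y c e y) = unfold C X' Y c (fun a => h (e a)) y.
Proof.
  apply (unfold_unique _ C X' Y c (fun a => h (e a)) (fun a => Binf_map C h (unfold C X Y c e a))).
  - intros x. unfold Binf_map. rewrite unfold_theta. rewrite unfold_theta. rewrite fmap_comp'. reflexivity.
  - intros x. unfold Binf_map. rewrite unfold_eps. rewrite unfold_eps. reflexivity.
Qed.

Lemma Binf_map_theta X Y (h : X -> Y) d :
  theta C Y (Binf_map C h d) = fmap B (Binf_map C h) (theta C X d).
Proof. unfold Binf_map. apply unfold_theta. Qed.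

Lemma Binf_map_eps X Y (h : X -> Y) d : eps C Y (Binf_map C h d) = h (eps C X d).
Proof. unfold Binf_map. apply unfold_eps. Qed.

End Co.

Section Fr.
Context {S : Functor} (M : FreeMonad S).

Lemma fold_ext X A (a : S A -> A) (b1 b2 : X -> A) :
  (forall x, b1 x = b2 x) -> forall t, fold M X A a b1 t = fold M X A a b2 t.
Proof.
  intros Hb t. symmetry. apply fold_unique.
  - intros; apply fold_iota.
  - intros x. rewrite fold_eta. symmetry; apply Hb.
Qed.

Lemma fold_id X (t : Sstar M X) : fold M X (Sstar M X) (iota M X) (eta M X) t = t.
Proof.
  symmetry. apply (fold_unique _ M X _ (iota M X) (eta M X) (fun t => t)).
  - intros s. rewrite fmap_id. reflexivity.
  - reflexivity.
Qed.

Lemma Sstar_map_iota X Y (h : X -> Y) s :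
  Sstar_map M h (iota M X s) = iota M Y (fmap S (Sstar_map M h) s).
Proof. unfold Sstar_map. apply fold_iota. Qed.
Lemma Sstar_map_eta X Y (h : X -> Y) x : Sstar_map M h (eta M X x) = eta M Y (h x).
Proof. unfold Sstar_map. apply fold_eta. Qed.

Lemma Sstar_map_ext X Y (f g : X -> Y) : (forall x, f x = g x) ->
  forall t, Sstar_map M f t = Sstar_map M g t.
Proof. intros H. unfold Sstar_map. apply fold_ext. intros; rewrite H; reflexivity. Qed.

Lemma Sstar_map_id X t : Sstar_map M (fun x : X => x) t = t.
Proof. apply fold_id. Qed.

Lemma fold_fusion X A A' (a : S A -> A) (b : X -> A) (a' : S A' -> A') (h : A -> A') :
  (forall s, h (a s) = a' (fmap S h s)) ->
  forall t, h (fold M X A a b t) = fold M X A' a' (fun x => h (b x)) t.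
Proof.
  intros Hh. apply (fold_unique _ M X A' a' (fun x => h (b x)) (fun t => h (fold M X A a b t))).
  - intros s. rewrite fold_iota. rewrite Hh. rewrite fmap_comp'. reflexivity.
  - intros x. rewrite fold_eta. reflexivity.
Qed.

Lemma Sstar_map_comp X Y Z (f : X -> Y) (g : Y -> Z) t :
  Sstar_map M g (Sstar_map M f t) = Sstar_map M (fun x => g (f x)) t.
Proof.
  unfold Sstar_map at 2. rewrite fold_fusion with (a' := iota M Z).
  - apply fold_ext. intros; apply Sstar_map_eta.
  - intros s; apply Sstar_map_iota.
Qed.

Lemma mu_iota X s : mu M X (iota M (Sstar M X) s) = iota M X (fmap S (mu M X) s).
Proof. unfold mu. apply fold_iota. Qed.
Lemma mu_eta X t : mu M X (eta M (Sstar M X) t) = t.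
Proof. unfold mu. apply fold_eta. Qed.

Lemma mu_Seta X t : mu M X (Sstar_map M (eta M X) t) = t.
Proof.
  unfold Sstar_map. rewrite fold_fusion with (a' := iota M X).
  - rewrite (fold_ext _ _ _ _ (eta M X)). apply fold_id. intros; apply mu_eta.
  - intros; apply mu_iota.
Qed.

Lemma mu_nat X Y (h : X -> Y) t :
  mu M Y (Sstar_map M (Sstar_map M h) t) = Sstar_map M h (mu M X t).
Proof.
  unfold Sstar_map at 1. rewrite (fold_fusion _ _ _ _ _ (iota M Y) (mu M Y)).
  - unfold mu at 2. rewrite (fold_fusion _ _ _ _ _ (iota M Y) (Sstar_map M h)).
    + apply fold_ext. intros x. try rewrite mu_eta. try reflexivity.
    + intros; apply Sstar_map_iota.
  - intros; apply mu_iota.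
Qed.


Definition roll {V : U} (z : (S (Sstar M V) + V)%type) : Sstar M V :=
  match z with inl s => iota M V s | inr x => eta M V x end.
Definition unroll {V : U} : Sstar M V -> (S (Sstar M V) + V)%type :=
  fold M V _ (fun s => inl (fmap S roll s)) inr.

Lemma roll_unroll V (t : Sstar M V) : roll (unroll t) = t.
Proof.
  rewrite <- (fold_id V t) at 2. unfold unroll.
  apply (fold_unique _ M V _ (iota M V) (eta M V) (fun t => roll (fold M V _ (fun s => inl (fmap S roll s)) inr t))).
  - intros s. rewrite fold_iota. simpl. rewrite fmap_comp'. reflexivity.
  - intros x. rewrite fold_eta. reflexivity.
Qed.

Lemma unroll_iota V s : unroll (iota M V s) = inl s.
Proof.
  unfold unroll. rewrite fold_iota. f_equal. rewrite fmap_comp'.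
  rewrite (fmap_ext _ _ _ _ (fun a => a)). apply fmap_id. apply roll_unroll.
Qed.
Lemma unroll_eta V x : unroll (eta M V x) = inr x.
Proof. unfold unroll. apply fold_eta. Qed.

Lemma Sstar_cases V (t : Sstar M V) : (exists s, t = iota M V s) \/ (exists x, t = eta M V x).
Proof.
  rewrite <- (roll_unroll V t). destruct (unroll t) as [s|x]; simpl; eauto.
Qed.

End Fr.
Section Fr2.
Context {S : Functor} (M : FreeMonad S).
Lemma mu_assoc X t :
  mu M X (Sstar_map M (mu M X) t) = mu M X (mu M (Sstar M X) t).
Proof.
  unfold Sstar_map. rewrite (fold_fusion M _ _ _ _ _ (iota M X) (mu M X)).
  - change (mu M (Sstar M X) t) with (fold M _ _ (iota M (Sstar M X)) (fun x => x) t).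
    rewrite (fold_fusion M _ _ _ _ _ (iota M X) (mu M X)).
    + apply fold_ext. intros x. apply mu_eta.
    + intros; apply mu_iota.
  - intros; apply mu_iota.
Qed.
End Fr2.


Record DC := {
  dcar : Type;
  dle : dcar -> dcar -> Prop;
  drefl : forall x, dle x x;
  dtrans : forall x y z, dle x y -> dle y z -> dle x z;
  danti : forall x y, dle x y -> dle y x -> x = y;
  dsup : forall D, (directed dle D \/ forall x, ~ D x) -> exists s, is_lub dle D s
}.
Arguments dle {d} _ _.

Definition adm (Dc : DC) (F : dcar Dc -> dcar Dc) (P : dcar Dc -> Prop) : Prop :=
  (forall x, P x -> P (F x)) /\
  (forall D s, (directed (@dle Dc) D \/ forall x, ~ D x) -> (forall x, D x -> P x) ->
     is_lub (@dle Dc) D s -> P s).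

Section LFP.
Context (Dc : DC).
Notation T := (dcar Dc).
Notation le := (@dle Dc).
Context (F : T -> T).
Context (Fmono : forall x y, le x y -> le (F x) (F y)).

Definition II (x : T) : Prop := forall P, adm Dc F P -> P x.

Lemma II_adm : adm Dc F II.
Proof.
  split.
  - intros x Hx P HP. apply (proj1 HP). apply Hx; exact HP.
  - intros D s HD HDP Hs P HP. apply (proj2 HP) with D; auto.
    intros x Dx; apply HDP; auto.
Qed.

Lemma II_infl : forall x, II x -> le x (F x).
Proof.
  intros x Hx. apply Hx. split.
  - intros y Hy. apply Fmono; auto.
  - intros D s HD HDP Hs. apply (proj2 Hs). intros d Dd.
    apply dtrans with (F d); auto. apply Fmono. apply (proj1 Hs); auto.
Qed.

Definition extreme x := II x /\ forall y, II y -> le y x -> y <> x -> le (F y) x.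

Lemma Mx : forall x, extreme x -> forall y, II y -> le y x \/ le (F x) y.
Proof.
  intros x [Ix Ex] y Iy.
  assert (H : II y /\ (le y x \/ le (F x) y)).
  { apply Iy. split.
    - intros z [Iz [Hz|Hz]]; split.
      + apply (proj1 II_adm); auto.
      + destruct (classic (z = x)) as [->|Hne].
        * right; apply drefl.
        * left; apply Ex; auto.
      + apply (proj1 II_adm); auto.
      + right. apply dtrans with z; auto. apply II_infl; auto.
    - intros D s HD HDP Hs. split.
      + apply (proj2 II_adm) with D; auto. intros; apply HDP; auto.
      + destruct (classic (exists d, D d /\ le (F x) d)) as [[d [Dd Hd]]|Hn].
        * right. apply dtrans with d; auto. apply (proj1 Hs); auto.
        * left. apply (proj2 Hs). intros d Dd.
          destruct (HDP d Dd) as [_ [H|H]]; auto. exfalso; eauto. }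
  exact (proj2 H).
Qed.

Lemma all_extreme : forall x, II x -> extreme x.
Proof.
  intros x Ix. apply Ix. split.
  - intros z Ez. split.
    + apply (proj1 II_adm); apply (proj1 Ez).
    + intros y Iy Hle Hne. destruct (Mx z Ez y Iy) as [H|H].
      * destruct (classic (y = z)) as [->|Hn].
        -- apply drefl.
        -- apply dtrans with z. apply (proj2 Ez); auto. apply II_infl, (proj1 Ez).
      * exfalso; apply Hne; apply danti; auto.
  - intros D s HD HDP Hs. split.
    + apply (proj2 II_adm) with D; auto. intros; apply HDP; auto.
    + intros y Iy Hle Hne.
      destruct (classic (exists d, D d /\ ~ le d y)) as [[d [Dd Hd]]|Hn].
      * destruct (Mx d (HDP d Dd) y Iy) as [H|H].
        -- apply dtrans with d. apply (proj2 (HDP d Dd)); auto.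
           intros ->; apply Hd, drefl. apply (proj1 Hs); auto.
        -- exfalso; apply Hd. apply dtrans with (F d); auto. apply II_infl, (proj1 (HDP d Dd)).
      * exfalso; apply Hne. apply danti; auto. apply (proj2 Hs). intros d Dd.
        apply NNPP; intros Hc; apply Hn; eauto.
Qed.

Lemma lfp_exists : exists p, F p = p /\ (forall q, le (F q) q -> le p q) /\ (forall P, adm Dc F P -> P p).
Proof.
  assert (Hdir : directed le II).
  { split.
    - destruct (dsup Dc (fun _ => False) (or_intror (fun _ h => h))) as [b Hb].
      exists b. apply (proj2 II_adm) with (fun _ => False); auto. intros _ [].
    - intros x y Ix Iy. destruct (Mx x (all_extreme x Ix) y Iy) as [H|H].
      + exists x; repeat split; auto. apply drefl.
      + exists y; repeat split; auto. apply dtrans with (F x); auto. apply II_infl; auto. apply drefl. }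
  destruct (dsup Dc II (or_introl Hdir)) as [s Hs].
  assert (Is : II s) by (apply (proj2 II_adm) with II; auto).
  exists s. split; [|split].
  - apply danti. apply (proj1 Hs). apply (proj1 II_adm); auto. apply II_infl; auto.
  - intros q Hq. apply Is. split.
    + intros x Hx. apply dtrans with (F q); auto.
    + intros D s' _ HDP Hs'. apply (proj2 Hs'). auto.
  - intros P HP. apply Is; auto.
Qed.
End LFP.


Lemma lub_unique {T} (le : T -> T -> Prop) (anti : forall x y, le x y -> le y x -> x = y) D s s' :
  is_lub le D s -> is_lub le D s' -> s = s'.
Proof. intros [H1 H2] [H3 H4]. apply anti; auto. Qed.

Lemma lub_ext {T} (le : T -> T -> Prop) (anti : forall x y, le x y -> le y x -> x = y) (D D' : T -> Prop) s s' :
  (forall x, D x <-> D' x) -> is_lub le D s -> is_lub le D' s' -> s = s'.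
Proof.
  intros He [H1 H2] [H3 H4]. apply anti.
  - apply H2. intros x Dx. apply H3. apply He; auto.
  - apply H4. intros x Dx. apply H1. apply He; auto.
Qed.

Definition image {T T'} (f : T -> T') (D : T -> Prop) : T' -> Prop :=
  fun y => exists x, D x /\ y = f x.

Lemma dir_image {T T'} (le : T -> T -> Prop) (le' : T' -> T' -> Prop) (f : T -> T') D :
  (forall x y, le x y -> le' (f x) (f y)) ->
  (directed le D \/ forall x, ~ D x) -> (directed le' (image f D) \/ forall y, ~ image f D y).
Proof.
  intros Hm [[[x Dx] Hd]|He].
  - left. split. exists (f x), x; auto.
    intros a b [x1 [D1 ->]] [x2 [D2 ->]]. destruct (Hd x1 x2 D1 D2) as [z [Dz [H1 H2]]].
    exists (f z); repeat split; auto. exists z; auto.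
  - right. intros y [x [Dx _]]. eapply He; eauto.
Qed.

Section Ord.
Context {B : Functor} (leB : forall X : U, B X -> B X -> Prop) (HB : dcpo_bot_ordered B leB).

Lemma leB_refl X x : leB X x x.
Proof. destruct HB as [[H _] _]. apply H. Qed.
Lemma leB_trans X x y z : leB X x y -> leB X y z -> leB X x z.
Proof. destruct HB as [[_ [H _]] _]. apply H. Qed.
Lemma leB_map X Y (f : X -> Y) x y : leB X x y -> leB Y (fmap B f x) (fmap B f y).
Proof. destruct HB as [[_ [_ H]] _]. apply H. Qed.
Lemma leB_anti X x y : leB X x y -> leB X y x -> x = y.
Proof. destruct HB as [_ [H _]]. apply H. Qed.

Lemma B_sup X D : (directed (leB X) D \/ forall x, ~ D x) -> exists s, is_lub (leB X) D s.
Proof.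
  destruct HB as [_ [_ [Hbot [Hsup _]]]]. intros [Hd|He]; auto.
  destruct (Hbot X) as [b Hb]. exists b. split. intros x Dx; exfalso; eapply He; eauto.
  intros u _. apply Hb.
Qed.

Lemma B_cont X Y (f : X -> Y) D s : (directed (leB X) D \/ forall x, ~ D x) ->
  is_lub (leB X) D s -> is_lub (leB Y) (image (fmap B f) D) (fmap B f s).
Proof. destruct HB as [_ [_ [_ [_ H]]]]. intros; apply H; auto. Qed.

Section FunDC.
Context (A : Type) (Y : U).
Definition fle (f g : A -> B Y) := forall a, leB Y (f a) (g a).

Lemma fun_sup (D : (A -> B Y) -> Prop) : (directed fle D \/ forall x, ~ D x) ->
  exists s, is_lub fle D s /\ forall a, is_lub (leB Y) (image (fun f => f a) D) (s a).
Proof.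
  intros HD.
  assert (Ha : forall a, exists y, is_lub (leB Y) (image (fun f => f a) D) y).
  { intros a. apply B_sup. apply (dir_image fle). intros x y H; apply H. exact HD. }
  exists (fun a => proj1_sig (constructive_indefinite_description _ (Ha a))).
  assert (Hp : forall a, is_lub (leB Y) (image (fun f => f a) D)
            (proj1_sig (constructive_indefinite_description _ (Ha a)))).
  { intros a. apply proj2_sig. }
  split; auto. split.
  - intros f Df a. apply (proj1 (Hp a)). exists f; auto.
  - intros u Hu a. apply (proj2 (Hp a)). intros y [f [Df ->]]. apply Hu; auto.
Qed.

Definition funDC : DC.
Proof.
  refine {| dcar := A -> B Y; dle := fle |}.
  - intros x a; apply leB_refl.
  - intros x y z H1 H2 a; eapply leB_trans; eauto.
  - intros x y H1 H2. apply functional_extensionality. intros a; apply leB_anti; auto.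
  - intros D HD. destruct (fun_sup D HD) as [s [Hs _]]. eauto.
Defined.

Lemma fun_lub_pointwise (D : (A -> B Y) -> Prop) s : (directed fle D \/ forall x, ~ D x) ->
  is_lub fle D s -> forall a, is_lub (leB Y) (image (fun f => f a) D) (s a).
Proof.
  intros HD Hs. destruct (fun_sup D HD) as [s' [Hs' Hp]].
  assert (s = s'). { apply (lub_unique fle (danti funDC) D); auto. }
  subst; auto.
Qed.
End FunDC.

End Ord.

Section ProdDC.
Context (D1 D2 : DC).
Definition ple (x y : dcar D1 * dcar D2) := dle (fst x) (fst y) /\ dle (snd x) (snd y).

Lemma prod_sup (D : dcar D1 * dcar D2 -> Prop) : (directed ple D \/ forall x, ~ D x) ->
  exists s, is_lub ple D s /\ is_lub dle (image fst D) (fst s) /\ is_lub dle (image snd D) (snd s).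
Proof.
  intros HD.
  destruct (dsup D1 (image fst D)) as [s1 H1].
  { apply (dir_image ple). intros x y H; apply H. exact HD. }
  destruct (dsup D2 (image snd D)) as [s2 H2].
  { apply (dir_image ple). intros x y H; apply H. exact HD. }
  exists (s1, s2). simpl. split; auto. split.
  - intros x Dx. split; [apply (proj1 H1)|apply (proj1 H2)]; exists x; auto.
  - intros u Hu. split; [apply (proj2 H1)|apply (proj2 H2)]; intros y [x [Dx ->]]; apply Hu; auto.
Qed.

Definition prodDC : DC.
Proof.
  refine {| dcar := (dcar D1 * dcar D2)%type; dle := ple |}.
  - intros x; split; apply drefl.
  - intros x y z [H1 H2] [H3 H4]; split; eapply dtrans; eauto.
  - intros [x1 x2] [y1 y2] [H1 H2] [H3 H4]; simpl in *. f_equal; apply danti; auto.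
  - intros D HD. destruct (prod_sup D HD) as [s [Hs _]]; eauto.
Defined.

Lemma prod_lub (D : dcar D1 * dcar D2 -> Prop) s : (directed ple D \/ forall x, ~ D x) ->
  is_lub ple D s -> is_lub dle (image fst D) (fst s) /\ is_lub dle (image snd D) (snd s).
Proof.
  intros HD Hs. destruct (prod_sup D HD) as [s' [Hs' Hp]].
  assert (s = s'). { apply (lub_unique ple (danti prodDC) D); auto. }
  subst; auto.
Qed.
End ProdDC.


Section Main.
Context {B : Functor} (leB : forall X : U, B X -> B X -> Prop) (HB : dcpo_bot_ordered B leB).
Context (C : CofreeComonad B) {S : Functor} (M : FreeMonad S).
Context (rho : forall X : U, S (Binf C X) -> B (Sstar M X)).
Context (Hnat : biGSOS_natural C M rho) (Hmon : monotone_biGSOS C M leB rho).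

Lemma coext_theta X (f : X -> B X) x : theta C X (coext C f x) = fmap B (coext C f) (f x).
Proof. unfold coext. apply unfold_theta. Qed.
Lemma coext_eps X (f : X -> B X) x : eps C X (coext C f x) = x.
Proof. unfold coext. apply unfold_eps. Qed.

Lemma coext_morph V W (c1 : V -> B V) (c2 : W -> B W) (g : V -> W) :
  (forall y, fmap B g (c1 y) = c2 (g y)) ->
  forall y, coext C c2 (g y) = Binf_map C g (coext C c1 y).
Proof.
  intros Hg y. unfold coext at 1. rewrite (unfold_morph C _ _ _ c1 c2 g); auto.
  unfold coext. rewrite Binf_map_unfold. reflexivity.
Qed.

Lemma coext_sim V (K1 K2 : V -> B V) : fle leB V V K1 K2 ->
  forall x, lesim C leB V (coext C K1 x) (coext C K2 x).
Proof.
  intros HK x. unfold lesim, similarity.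
  exists (fun a b => exists y, a = coext C K1 y /\ b = coext C K2 y). split.
  2:{ exists x; auto. }
  intros a b [y [-> ->]]. unfold Rel_le.
  exists (fmap B (coext C K1) (K2 y), y), (fmap B (coext C K2) (K2 y), y).
  split; [|split].
  - unfold prodF_le; simpl. rewrite coext_theta, coext_eps. split; auto.
    apply leB_map; auto.
  - exists (fmap B (fun z => exist (fun p : Binf C V * Binf C V =>
              exists y0, fst p = coext C K1 y0 /\ snd p = coext C K2 y0)
              (coext C K1 z, coext C K2 z) (ex_intro _ z (conj eq_refl eq_refl))) (K2 y), y).
    unfold prodF_map; simpl. split; f_equal; rewrite fmap_comp'; reflexivity.
  - unfold prodF_le; simpl. rewrite coext_theta, coext_eps. split; auto. apply leB_refl; auto.
Qed.

Definition Phi (V : U) (v : V -> B V) (K : Sstar M V -> B (Sstar M V)) : Sstar M V -> B (Sstar M V) :=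
  fun t => match unroll M t with
           | inl s => fmap B (mu M V) (rho (Sstar M V) (fmap S (coext C K) s))
           | inr x => fmap B (eta M V) (v x)
           end.

Lemma Phi_iota V v K s : Phi V v K (iota M V s) = fmap B (mu M V) (rho (Sstar M V) (fmap S (coext C K) s)).
Proof. unfold Phi. rewrite unroll_iota. reflexivity. Qed.
Lemma Phi_eta V v K x : Phi V v K (eta M V x) = fmap B (eta M V) (v x).
Proof. unfold Phi. rewrite unroll_eta. reflexivity. Qed.

Lemma Phi_mono V (v1 v2 : V -> B V) K1 K2 : (forall x, leB V (v1 x) (v2 x)) ->
  fle leB _ _ K1 K2 -> fle leB _ _ (Phi V v1 K1) (Phi V v2 K2).
Proof.
  intros Hv HK t. destruct (Sstar_cases M V t) as [[s ->]|[x ->]].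
  - rewrite !Phi_iota. apply leB_map; auto. apply Hmon.
    exists (fmap S (fun z => exist (fun p : Binf C (Sstar M V) * Binf C (Sstar M V) =>
              lesim C leB _ (fst p) (snd p))
              (coext C K1 z, coext C K2 z) (coext_sim _ K1 K2 HK z)) s).
    split; rewrite fmap_comp'; reflexivity.
  - rewrite !Phi_eta. apply leB_map; auto.
Qed.

Definition fDC V := funDC leB HB (Sstar M V) (Sstar M V).

Lemma lfp_ex V (v : V -> B V) : exists p : Sstar M V -> B (Sstar M V),
  Phi V v p = p /\ (forall q, fle leB _ _ (Phi V v q) q -> fle leB _ _ p q) /\
  (forall P, adm (fDC V) (Phi V v) P -> P p).
Proof.
  apply (lfp_exists (fDC V) (Phi V v)). intros x y H. apply Phi_mono; auto.
  intros; apply leB_refl; auto.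
Qed.

Definition lfp V v := proj1_sig (constructive_indefinite_description _ (lfp_ex V v)).
Lemma lfp_spec V v : Phi V v (lfp V v) = lfp V v /\ (forall q, fle leB _ _ (Phi V v q) q -> fle leB _ _ (lfp V v) q) /\
  (forall P, adm (fDC V) (Phi V v) P -> P (lfp V v)).
Proof. unfold lfp. apply proj2_sig. Qed.

Lemma lfp_fix V v t : Phi V v (lfp V v) t = lfp V v t.
Proof. rewrite (proj1 (lfp_spec V v)). reflexivity. Qed.


Lemma is_lub_equiv {T} (le : T -> T -> Prop) (D D' : T -> Prop) s :
  (forall x, D x <-> D' x) -> is_lub le D s -> is_lub le D' s.
Proof.
  intros He [H1 H2]. split.
  - intros x Dx; apply H1, He; auto.
  - intros u Hu; apply H2; intros x Dx; apply Hu, He; auto.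
Qed.

Lemma eq_sup {Tp : Type} {A1 A2 : Type} {Y1 Y2 : U} (D : Tp -> Prop)
  (pa : Tp -> A1 -> B Y1) (pb : Tp -> A2 -> B Y2) (g : Y1 -> Y2) (h : A1 -> A2) sa sb :
  (forall t, directed (leB Y1) (image (fun x => pa x t) D) \/ forall y, ~ image (fun x => pa x t) D y) ->
  (forall t, is_lub (leB Y1) (image (fun x => pa x t) D) (sa t)) ->
  (forall t, is_lub (leB Y2) (image (fun x => pb x t) D) (sb t)) ->
  (forall x, D x -> forall t, fmap B g (pa x t) = pb x (h t)) ->
  forall t, fmap B g (sa t) = sb (h t).
Proof.
  intros Hd Ha Hb Hx t.
  pose proof (B_cont leB HB _ _ g _ _ (Hd t) (Ha t)) as Hc.
  apply (lub_ext (leB Y2) (leB_anti leB HB _) _ _ _ _ ) with (2 := Hc) (3 := Hb (h t)).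
  intros y. split.
  - intros [z [[x [Dx ->]] ->]]. exists x. split; auto.
  - intros [x [Dx ->]]. exists (pa x t). split. exists x; auto. symmetry; auto.
Qed.

Lemma prod_fun_lub (A1 A2 : Type) (Y1 Y2 : U) (D : dcar (prodDC (funDC leB HB A1 Y1) (funDC leB HB A2 Y2)) -> Prop) s :
  (directed (@dle (prodDC (funDC leB HB A1 Y1) (funDC leB HB A2 Y2))) D \/ forall x, ~ D x) ->
  is_lub (@dle (prodDC (funDC leB HB A1 Y1) (funDC leB HB A2 Y2))) D s ->
  (forall t, (directed (leB Y1) (image (fun x => fst x t) D) \/ forall y, ~ image (fun x => fst x t) D y)
      /\ is_lub (leB Y1) (image (fun x => fst x t) D) (fst s t)) /\
  (forall t, (directed (leB Y2) (image (fun x => snd x t) D) \/ forall y, ~ image (fun x => snd x t) D y)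
      /\ is_lub (leB Y2) (image (fun x => snd x t) D) (snd s t)).
Proof.
  intros HD Hs. destruct (prod_lub _ _ D s HD Hs) as [H1 H2].
  assert (Hd1 : directed (fle leB A1 Y1) (image fst D) \/ forall x, ~ image fst D x).
  { apply (dir_image (ple _ _)). intros x y H; apply H. exact HD. }
  assert (Hd2 : directed (fle leB A2 Y2) (image snd D) \/ forall x, ~ image snd D x).
  { apply (dir_image (ple _ _)). intros x y H; apply H. exact HD. }
  split; intros t; split.
  - apply (dir_image (ple (funDC leB HB A1 Y1) (funDC leB HB A2 Y2))). intros x y H; apply H. exact HD.
  - apply is_lub_equiv with (2 := fun_lub_pointwise leB HB _ _ _ _ Hd1 H1 t).
    intros y; split. intros [f [[x [Dx ->]] ->]]; exists x; auto.
    intros [x [Dx ->]]; exists (fst x); split; auto; exists x; auto.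
  - apply (dir_image (ple (funDC leB HB A1 Y1) (funDC leB HB A2 Y2))). intros x y H; apply H. exact HD.
  - apply is_lub_equiv with (2 := fun_lub_pointwise leB HB _ _ _ _ Hd2 H2 t).
    intros y; split. intros [f [[x [Dx ->]] ->]]; exists x; auto.
    intros [x [Dx ->]]; exists (snd x); split; auto; exists x; auto.
Qed.

Lemma transfer V W (v : V -> B V) (w : W -> B W) (g : V -> W) :
  (forall x, fmap B g (v x) = w (g x)) ->
  forall t, fmap B (Sstar_map M g) (lfp V v t) = lfp W w (Sstar_map M g t).
Proof.
  intros Hg.
  pose (DD := prodDC (fDC V) (fDC W)).
  pose (P := (fun x : dcar DD => (Phi V v (fst x), Phi W w (snd x))) : dcar DD -> dcar DD).
  assert (Pmono : forall x y, @dle DD x y -> @dle DD (P x) (P y)).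
  { intros x y [H1 H2]. split; simpl; apply Phi_mono; auto; intros; apply leB_refl; auto. }
  destruct (lfp_exists _ P Pmono) as [p [Hfix [Hleast Hind]]].
  assert (Hp : p = (lfp V v, lfp W w)).
  { apply (danti (prodDC (fDC V) (fDC W))).
    - apply Hleast. unfold P; simpl. rewrite (proj1 (lfp_spec V v)), (proj1 (lfp_spec W w)).
      apply (drefl (prodDC (fDC V) (fDC W))).
    - split; simpl.
      + apply (proj1 (proj2 (lfp_spec V v))). 
        pose proof (f_equal fst Hfix) as Hf1. simpl in Hf1. rewrite Hf1. apply (drefl (fDC V)).
      + apply (proj1 (proj2 (lfp_spec W w))).
        pose proof (f_equal snd Hfix) as Hf1. simpl in Hf1. rewrite Hf1. apply (drefl (fDC W)). }
  assert (HQ : (fun x : dcar (prodDC (fDC V) (fDC W)) =>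
     forall t, fmap B (Sstar_map M g) (fst x t) = snd x (Sstar_map M g t)) p).
  { apply Hind. split.
    - intros [a b] Hq t. simpl in *. destruct (Sstar_cases M V t) as [[s ->]|[x ->]].
      + rewrite Sstar_map_iota, !Phi_iota. rewrite (fmap_comp' S _ _ _ (Sstar_map M g) (coext C b)).
        rewrite (fmap_ext S _ _ (fun z => coext C b (Sstar_map M g z)) (fun z => Binf_map C (Sstar_map M g) (coext C a z))).
        2:{ intros z. apply coext_morph. exact Hq. }
        rewrite <- (fmap_comp' S _ _ _ (coext C a) (Binf_map C (Sstar_map M g))).
        rewrite Hnat. rewrite !fmap_comp'. apply fmap_ext. intros z. symmetry; apply mu_nat.
      + rewrite Sstar_map_eta, !Phi_eta. rewrite <- Hg. rewrite !fmap_comp'. apply fmap_ext.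
        intros; apply Sstar_map_eta.
    - intros D s HD HDQ Hs.
      destruct (prod_fun_lub _ _ _ _ D s HD Hs) as [H1 H2].
      apply (eq_sup D fst snd (Sstar_map M g) (Sstar_map M g)).
      + intros t; apply H1.
      + intros t; apply H1.
      + intros t; apply H2.
      + exact HDQ. }
  rewrite Hp in HQ. exact HQ.
Qed.


Lemma fle_eq A Y (f g : A -> B Y) : f = g -> fle leB A Y f g.
Proof. intros ->. intros a; apply leB_refl; auto. Qed.

Lemma mu_lfp W (w : W -> B W) :
  forall t, fmap B (mu M W) (lfp (Sstar M W) (lfp W w) t) = lfp W w (mu M W t).
Proof.
  pose (DD := prodDC (fDC W) (fDC (Sstar M W))).
  pose (J := (fun x : dcar DD => (Phi W w (fst x), Phi (Sstar M W) (Phi W w (fst x)) (snd x))) : dcar DD -> dcar DD).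
  assert (Jmono : forall x y, @dle DD x y -> @dle DD (J x) (J y)).
  { intros x y [H1 H2]. split; simpl; apply Phi_mono; auto; try (intros; apply leB_refl; auto).
    apply Phi_mono; auto. intros; apply leB_refl; auto. }
  destruct (lfp_exists _ J Jmono) as [p [Hfix [Hleast Hind]]].
  set (k := lfp W w). set (K := lfp (Sstar M W) k).
  assert (Hk : Phi W w k = k) by apply (proj1 (lfp_spec W w)).
  assert (HK : Phi (Sstar M W) k K = K) by apply (proj1 (lfp_spec _ k)).
  assert (Hle : @dle DD p (k, K)).
  { apply Hleast. unfold J; simpl. rewrite Hk, HK. apply (drefl DD). }
  pose proof (f_equal fst Hfix) as Hf1. simpl in Hf1.
  pose proof (f_equal snd Hfix) as Hf2. simpl in Hf2.
  assert (Hp1 : fst p = k).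
  { apply (danti (fDC W)). apply (proj1 Hle). apply (proj1 (proj2 (lfp_spec W w))). apply fle_eq; exact Hf1. }
  assert (Hf1' : Phi W w (fst p) = fst p) by exact Hf1.
  assert (Hf2' : Phi (Sstar M W) (Phi W w (fst p)) (snd p) = snd p) by exact Hf2.
  rewrite Hf1', Hp1 in Hf2'.
  assert (Hp2 : snd p = K).
  { apply (danti (fDC (Sstar M W))). apply (proj2 Hle). apply (proj1 (proj2 (lfp_spec _ k))). apply fle_eq; exact Hf2'. }
  assert (HQ : (fun x : dcar DD => forall t, fmap B (mu M W) (snd x t) = fst x (mu M W t)) p).
  { apply Hind. split.
    - intros [a b] Hq t. simpl in *. destruct (Sstar_cases M _ t) as [[s ->]|[x ->]].
      + rewrite mu_iota, !Phi_iota. rewrite (fmap_comp' S _ _ _ (mu M W) (coext C a)).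
        rewrite (fmap_ext S _ _ (fun z => coext C a (mu M W z)) (fun z => Binf_map C (mu M W) (coext C b z))).
        2:{ intros z. apply coext_morph. exact Hq. }
        rewrite <- (fmap_comp' S _ _ _ (coext C b) (Binf_map C (mu M W))).
        rewrite Hnat. rewrite !fmap_comp'. apply fmap_ext. intros z. symmetry; apply mu_assoc.
      + rewrite mu_eta, !Phi_eta. rewrite fmap_comp'.
        rewrite (fmap_ext B _ _ _ (fun z => z)). apply fmap_id. intros; apply mu_eta.
    - intros D s HD HDQ Hs.
      destruct (prod_fun_lub _ _ _ _ D s HD Hs) as [H1 H2].
      apply (eq_sup D snd fst (mu M W) (mu M W)).
      + intros t; apply H2.
      + intros t; apply H2.
      + intros t; apply H1.
      + exact HDQ. }
  intros t. pose proof (HQ t) as HQt. simpl in HQt.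
  assert (E1 : forall y, fst p y = k y) by (intros; rewrite <- Hp1; reflexivity).
  assert (E2 : forall y, snd p y = K y) by (intros; rewrite <- Hp2; reflexivity).
  rewrite <- E1, <- E2. exact HQt.
Qed.


Definition kk X := lfp (Binf C X) (theta C X).
Definition lam X : Sstar M (Binf C X) -> Binf C (Sstar M X) :=
  unfold C (Sstar M X) (Sstar M (Binf C X)) (kk X) (Sstar_map M (eps C X)).

Lemma lam_theta X t : theta C _ (lam X t) = fmap B (lam X) (kk X t).
Proof. unfold lam. apply unfold_theta. Qed.
Lemma lam_eps X t : eps C _ (lam X t) = Sstar_map M (eps C X) t.
Proof. unfold lam. apply unfold_eps. Qed.

Lemma dist_law : distributive_law C M lam.
Proof.
  split; [|split; [|split; [|split]]].
  - intros X Y h t.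
    assert (Ht := transfer _ _ (theta C X) (theta C Y) (Binf_map C h)
                  (fun d => eq_sym (Binf_map_theta C X Y h d))).
    unfold lam at 1. rewrite (unfold_morph C _ _ _ (kk X) (kk Y) (Sstar_map M (Binf_map C h))) by exact Ht.
    unfold lam. rewrite Binf_map_unfold. apply unfold_ext. intros a.
    rewrite !Sstar_map_comp. apply Sstar_map_ext. intros d. apply Binf_map_eps.
  - intros X d. unfold lam.
    rewrite (unfold_morph C _ _ _ (theta C X) (kk X) (eta M (Binf C X))).
    + unfold Binf_map. apply unfold_ext. intros a. apply Sstar_map_eta.
    + intros y. unfold kk. rewrite <- lfp_fix. rewrite Phi_eta. reflexivity.
  - intros X t. apply lam_eps.
  - intros X t.
    set (K := lfp (Sstar M (Binf C X)) (kk X)).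
    unfold lam at 1.
    rewrite (unfold_morph C _ _ _ K (kk X) (mu M (Binf C X))) by apply mu_lfp.
    assert (Ht := transfer _ _ (kk X) (theta C (Sstar M X)) (lam X)
                  (fun y => eq_sym (lam_theta X y))).
    unfold lam at 1.
    rewrite (unfold_morph C _ _ _ K (kk (Sstar M X)) (Sstar_map M (lam X))) by exact Ht.
    rewrite Binf_map_unfold. apply unfold_ext. intros a.
    rewrite Sstar_map_comp. rewrite (Sstar_map_ext M _ _ (fun z => eps C _ (lam X z)) (Sstar_map M (eps C X))).
    2:{ intros; apply lam_eps. }
    rewrite mu_nat. reflexivity.
  - intros X t.
    assert (Ht := transfer _ _ (theta C X) (theta C (Binf C X)) (delta C X)
                  (fun d => eq_sym (coext_theta _ (theta C X) d))).
    unfold lam at 2.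
    rewrite (unfold_morph C _ _ _ (kk X) (kk (Binf C X)) (Sstar_map M (delta C X))) by exact Ht.
    unfold delta. rewrite (coext_morph _ _ (kk X) (theta C _) (lam X)) by (intros; symmetry; apply lam_theta).
    unfold coext. rewrite !Binf_map_unfold. apply unfold_ext. intros a. f_equal.
    rewrite Sstar_map_comp. rewrite (Sstar_map_ext M _ _ _ (fun z => z)). apply Sstar_map_id.
    intros; apply coext_eps.
Qed.

Definition w0 : Empty_set -> B Empty_set := fun e => match e with end.
Definition m0 := lfp Empty_set w0.

Lemma m0_least : least_supported_model C M leB rho m0.
Proof.
  split.
  - intros t. unfold m0. rewrite <- lfp_fix. apply Phi_iota.
  - intros g Hg t. apply (proj1 (proj2 (lfp_spec Empty_set w0))).
    intros a. destruct (Sstar_cases M _ a) as [[s ->]|[x ->]].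
    + rewrite Phi_iota, Hg. apply leB_refl; auto.
    + destruct x.
Qed.

Lemma m0_op : operational_model C M lam m0.
Proof.
  assert (Heq : op_model_eq C M lam m0).
  { intros t.
    set (K0 := lfp (Sstar M Empty_set) m0).
    rewrite (coext_morph _ _ K0 m0 (mu M Empty_set)) by apply mu_lfp.
    assert (Ht := transfer _ _ m0 (theta C _) (coext C m0)
                  (fun y => eq_sym (coext_theta _ m0 y))).
    unfold lam. rewrite (unfold_morph C _ _ _ K0 (kk _) (Sstar_map M (coext C m0))) by exact Ht.
    f_equal. unfold coext at 1. apply unfold_ext. intros a.
    rewrite Sstar_map_comp. rewrite (Sstar_map_ext M _ _ _ (fun z => z)). symmetry; apply Sstar_map_id.
    intros; apply coext_eps. }
  split; auto.
  intros m' Hm' t.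
  assert (Hc : forall s, coext C m' s = coext C m0 s).
  { intros s. pose proof (Hm' (Sstar_map M (eta M Empty_set) s)) as E1.
    pose proof (Heq (Sstar_map M (eta M Empty_set) s)) as E2.
    rewrite mu_Seta in E1, E2. rewrite E1, E2. f_equal. f_equal.
    rewrite !Sstar_map_comp. apply Sstar_map_ext. intros []. }
  assert (E : fmap B (coext C m') (m' t) = fmap B (coext C m0) (m0 t)).
  { rewrite <- !coext_theta. rewrite Hc. reflexivity. }
  apply (f_equal (fmap B (eps C _))) in E. rewrite !fmap_comp' in E.
  rewrite (fmap_ext B _ _ _ (fun z => z) (m' t)) in E by (intros; apply coext_eps).
  rewrite (fmap_ext B _ _ _ (fun z => z) (m0 t)) in E by (intros; apply coext_eps).
  rewrite !fmap_id in E. exact E.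
Qed.

End Main.

Theorem mainTheorem10 (B : Functor) (leB : forall X : U, B X -> B X -> Prop)
    (C : CofreeComonad B) (S : Functor) (M : FreeMonad S)
    (rho : forall X : U, S (Binf C X) -> B (Sstar M X)) :
  dcpo_bot_ordered B leB ->
  preserves_weak_pullbacks B ->
  biGSOS_natural C M rho ->
  monotone_biGSOS C M leB rho ->
  exists lam : forall X : U, Sstar M (Binf C X) -> Binf C (Sstar M X),
    distributive_law C M lam /\
    exists m : Sstar M Empty_set -> B (Sstar M Empty_set),
      least_supported_model C M leB rho m /\ operational_model C M lam m.
Proof.
  intros HB _ Hnat Hmon.
  exists (lam leB HB C M rho Hmon). split.
  - apply dist_law; auto.
  - exists (m0 leB HB C M rho Hmon). split.
    + apply m0_least.
    + apply m0_op; auto.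
Qed.
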